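(* Let $0<a<1$, let $\hat c\in\{0,-1,-2,\dots\}$, and let $\mathcal F=(F_1,F_2)$ be a pair of finite sets of positive integers satisfying condition (C): $\{0,1,\dots,-\hat c\}\subset F_1\cup(-\hat c-F_2)$. For every sequence of real numbers $\hat c_s\notin\{0,-1,-2,\dots\}$ with $\lim_{s\to\infty}\hat c_s=\hat c$ we have $\lim_{s\to\infty}\rho^{\mathcal F}_{a,\hat c_s}(x)=\nu^a_{\hat c;\mathcal F}(x)$ for every $x\in\mathbb N$ (the mass at $x$). Moreover, if $\nu^a_{\hat c;\mathcal F}$ is a positive measure, then the numbers $\hat c_s\notin\{0,-1,-2,\dots\}$ with $\hat c_s\to\hat c$ can be chosen so that all the measures $\rho^{\mathcal F}_{a,\hat c_s}$ are positive as well.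
   Context: $\mathbb N=\{0,1,2,\dots\}$. For a finite set $F$ and integer $t$, $t-F=\{t-f:f\in F\}$. For $\hat c\in\{0,-1,-2,\dots\}$ and $\mathcal F$ satisfying (C), $\mathcal H=[(F_1\cup(-\hat c-F_2))\setminus\{0,1,\dots,-\hat c\}]\cup[F_1\cap(-\hat c-F_2)]$ and $\nu^a_{\hat c;\mathcal F}=\sum_{x\in\mathbb N\setminus F_1}\prod_{h\in\mathcal H}(x-h)\,a^x\,\delta_x$. For $d\notin\{0,-1,-2,\dots\}$, $\rho^{\mathcal F}_{a,d}=\sum_{x=0}^\infty\prod_{f\in F_1}(x-f)\prod_{f\in F_2}(x+d+f)\frac{a^x\Gamma(x+d)}{x!}\delta_x$. A discrete measure is positive if all its masses are nonnegative (and not all zero). *)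

(* Defs.v *)
From Stdlib Require Import Reals ZArith List.
From Coquelicot Require Import Coquelicot.
Import ListNotations.
Open Scope R_scope.

Definition lprod {A : Type} (g : A -> R) (l : list A) : R :=
  fold_right Rmult 1 (map g l).

Definition nonpos_int (d : R) : Prop := exists n : nat, d = - INR n.

(* Euler's Gamma function on the reals, through Gauss' limit formula
   Gamma(z) = lim_n n! n^z / (z (z+1) ... (z+n)),
   valid (and the standard meromorphic Gamma) for z not in {0,-1,-2,...}. *)
Definition Gamma (z : R) : R :=
  real (Lim_seq (fun n : nat =>
     INR (fact n) * Rpower (INR n) z / lprod (fun k : nat => z + INR k) (List.seq 0 (S n)))).

Definition finset_pos (F : list nat) : Prop := NoDup F /\ List.Forall (fun f => (0 < f)%nat) F.

Definition F1Z (F1 : list nat) : list Z := map Z.of_nat F1.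
Definition shiftF2 (c : Z) (F2 : list nat) : list Z := map (fun f => (- c - Z.of_nat f)%Z) F2.

Definition inZb (h : Z) (l : list Z) : bool := existsb (Z.eqb h) l.

Definition condC (c : Z) (F1 F2 : list nat) : Prop :=
  forall k : Z, (0 <= k <= - c)%Z -> In k (F1Z F1) \/ In k (shiftF2 c F2).

Definition Hset (c : Z) (F1 F2 : list nat) : list Z :=
  let G := shiftF2 c F2 in
  nodup Z.eq_dec
    (filter (fun h => negb ((0 <=? h)%Z && (h <=? - c)%Z)) (F1Z F1 ++ G)
     ++ filter (fun h => inZb h G) (F1Z F1)).

Definition nu (c : Z) (F1 F2 : list nat) (a : R) (x : nat) : R :=
  if in_dec Nat.eq_dec x F1 then 0
  else lprod (fun h => INR x - IZR h) (Hset c F1 F2) * a ^ x.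

Definition rho (F1 F2 : list nat) (a d : R) (x : nat) : R :=
  lprod (fun f => INR x - INR f) F1 * lprod (fun f => INR x + d + INR f) F2
  * (a ^ x * Gamma (INR x + d) / INR (fact x)).

Definition positive_measure (m : nat -> R) : Prop :=
  (forall x, 0 <= m x) /\ exists x, m x <> 0.

(* Main.v *)
Require Import Defs.
From Stdlib Require Import Reals ZArith List Lia Lra Permutation.
From Coquelicot Require Import Coquelicot.
Import ListNotations.
Lemma NoDup_map_inj {A B} (f : A -> B) l : (forall x y, f x = f y -> x = y) -> NoDup l -> NoDup (map f l).
Proof. intros Hf H; induction H; simpl; constructor; auto.
  intros Hin. apply in_map_iff in Hin. destruct Hin as [y [E Hy]]. apply Hf in E; subst; auto. Qed.

Lemma cnt_nodup (l : list Z) x : NoDup l -> count_occ Z.eq_dec l x = if in_dec Z.eq_dec x l then 1%nat else 0%nat.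
Proof. intros H. destruct (in_dec Z.eq_dec x l) as [I|I].
  - apply (count_occ_In Z.eq_dec) in I. pose proof (proj1 (NoDup_count_occ Z.eq_dec l) H x). lia.
  - apply (count_occ_not_In Z.eq_dec) in I. auto. Qed.

Definition rangeZ (n : nat) : list Z := map Z.of_nat (seq 0 (S n)).

Lemma in_F1Z F1 h : In h (F1Z F1) <-> exists f, In f F1 /\ h = Z.of_nat f.
Proof. unfold F1Z. rewrite in_map_iff. split; intros [f [A B]]; eauto. Qed.

Lemma in_G c F2 h : In h (shiftF2 c F2) <-> exists f, In f F2 /\ h = (- c - Z.of_nat f)%Z.
Proof. unfold shiftF2. rewrite in_map_iff. split; intros [f [A B]]; eauto. Qed.

Lemma inZb_In h l : inZb h l = true <-> In h l.
Proof. unfold inZb. rewrite existsb_exists. split.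
  - intros [y [Hy E]]. apply Z.eqb_eq in E. subst; auto.
  - intros Hh. exists h. split; auto. apply Z.eqb_refl. Qed.

Lemma in_Hset c F1 F2 h : In h (Hset c F1 F2) <->
  ((In h (F1Z F1) \/ In h (shiftF2 c F2)) /\ ~ (0 <= h <= - c)%Z) \/
  (In h (F1Z F1) /\ In h (shiftF2 c F2)).
Proof. unfold Hset. rewrite nodup_In, in_app_iff, !filter_In, in_app_iff, inZb_In.
  rewrite Bool.negb_true_iff, Bool.andb_false_iff, !Z.leb_gt. split.
  - intros [[A B]|[A B]]; [left|right]; split; auto; lia.
  - intros [[A B]|[A B]]; [left|right]; split; auto.
    destruct (Z_le_gt_dec 0 h); [right|left]; lia. Qed.

Lemma in_range n h : In h (rangeZ n) <-> (0 <= h <= Z.of_nat n)%Z.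
Proof. unfold rangeZ. rewrite in_map_iff. split.
  - intros [k [<- Hk]]. apply in_seq in Hk. lia.
  - intros H. exists (Z.to_nat h). split. lia. apply in_seq. lia. Qed.

Lemma perm_main c F1 F2 : (c <= 0)%Z -> finset_pos F1 -> finset_pos F2 -> condC c F1 F2 ->
  Permutation (F1Z F1 ++ shiftF2 c F2) (Hset c F1 F2 ++ rangeZ (Z.to_nat (- c))).
Proof. intros Hc [N1 P1] [N2 P2] HC.
  assert (ND1 : NoDup (F1Z F1)) by (apply NoDup_map_inj; auto; lia).
  assert (ND2 : NoDup (shiftF2 c F2)) by (apply NoDup_map_inj; auto; lia).
  assert (NDH : NoDup (Hset c F1 F2)) by apply NoDup_nodup.
  assert (NDR : NoDup (rangeZ (Z.to_nat (- c)))) by (apply NoDup_map_inj; [lia| apply seq_NoDup]).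
  apply (Permutation_count_occ Z.eq_dec). intros h.
  rewrite !count_occ_app, !cnt_nodup by auto.
  pose proof (in_Hset c F1 F2 h) as IH. pose proof (in_range (Z.to_nat (- c)) h) as IR.
  assert (I1 : In h (F1Z F1) -> (1 <= h)%Z).
  { intros Hh. apply in_F1Z in Hh. destruct Hh as [f [Hf ->]].
    rewrite Forall_forall in P1. specialize (P1 f Hf). lia. }
  assert (I2 : In h (shiftF2 c F2) -> (h <= - c - 1)%Z).
  { intros Hh. apply in_G in Hh. destruct Hh as [f [Hf ->]].
    rewrite Forall_forall in P2. specialize (P2 f Hf). lia. }
  specialize (HC h).
  destruct (in_dec Z.eq_dec h (F1Z F1)); destruct (in_dec Z.eq_dec h (shiftF2 c F2));
  destruct (in_dec Z.eq_dec h (Hset c F1 F2)); destruct (in_dec Z.eq_dec h (rangeZ (Z.to_nat (- c))));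
  simpl; try reflexivity; exfalso.
  all: assert (R0 : (0 <= h <= - c)%Z <-> In h (rangeZ (Z.to_nat (- c)))) by (rewrite IR; lia).
  all: try tauto.
  all: try (pose proof (I1 i); pose proof (I2 i0); tauto).
  apply n, R0. pose proof (I1 i); pose proof (I2 i0); lia.
Qed.

Open Scope R_scope.

Lemma lprod_app {A} (g : A -> R) l1 l2 : lprod g (l1 ++ l2) = lprod g l1 * lprod g l2.
Proof. unfold lprod; induction l1; simpl; [ring| rewrite IHl1; ring]. Qed.

Lemma lprod_cons {A} (g : A -> R) a l : lprod g (a :: l) = g a * lprod g l.
Proof. reflexivity. Qed.

Lemma lprod_pos {A} (g : A -> R) l : (forall x, In x l -> 0 < g x) -> 0 < lprod g l.
Proof. induction l; intros H; unfold lprod in *; simpl. lra.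
  apply Rmult_lt_0_compat; auto with datatypes. Qed.

Lemma lprod_neq0 {A} (g : A -> R) l : (forall x, In x l -> g x <> 0) -> lprod g l <> 0.
Proof. induction l; intros H; unfold lprod in *; simpl. lra.
  apply Rmult_integral_contrapositive_currified; auto with datatypes. Qed.

Lemma lprod_ext {A} (g h : A -> R) l : (forall x, In x l -> g x = h x) -> lprod g l = lprod h l.
Proof. induction l; intros H; unfold lprod in *; simpl; auto.
  rewrite H, IHl; auto with datatypes. Qed.

Lemma lprod_map {A B} (g : B -> R) (f : A -> B) l : lprod g (map f l) = lprod (fun x => g (f x)) l.
Proof. unfold lprod; rewrite map_map; reflexivity. Qed.

Lemma lprod_perm {A} (g : A -> R) l1 l2 : Permutation l1 l2 -> lprod g l1 = lprod g l2.
Proof. intros P; induction P; unfold lprod in *; simpl; try lra. rewrite IHP; auto. Qed.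

Lemma lprod_zero {A} (g : A -> R) l x : In x l -> g x = 0 -> lprod g l = 0.
Proof. induction l as [|b l IH]; simpl; [tauto|]; intros [<-|H] Hg; unfold lprod in *; simpl.
  rewrite Hg; ring. rewrite IH; auto; ring. Qed.

Lemma lprod_seq_S (g : nat -> R) s n : lprod g (seq s (S n)) = lprod g (seq s n) * g (s + n)%nat.
Proof. rewrite seq_S, lprod_app; unfold lprod at 2; simpl; ring. Qed.

Lemma lprod_seq_shift (g : nat -> R) s n : lprod g (seq (S s) n) = lprod (fun k => g (S k)) (seq s n).
Proof. rewrite <- seq_shift, lprod_map; reflexivity. Qed.

Definition Gs (z : R) (n : nat) : R :=
  INR (fact n) * Rpower (INR n) z / lprod (fun k : nat => z + INR k) (List.seq 0 (S n)).

Lemma Gamma_Gs z : Gamma z = real (Lim_seq (Gs z)).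
Proof. reflexivity. Qed.

Lemma Gs_pos z n : 0 < z -> 0 < Gs z n.
Proof. intros Hz; unfold Gs, Rdiv. apply Rmult_lt_0_compat.
  apply Rmult_lt_0_compat. apply INR_fact_lt_0. unfold Rpower; apply exp_pos.
  apply Rinv_0_lt_compat, lprod_pos. intros x _. pose proof (pos_INR x); lra. Qed.

Lemma Gs_S z n : 0 < z -> (1 <= n)%nat ->
  Gs z (S n) = Gs z n * ((INR n + 1) * exp (z * (ln (INR n + 1) - ln (INR n))) / (z + INR n + 1)).
Proof. intros Hz Hn. unfold Gs. rewrite (lprod_seq_S _ 0 (S n)).
  assert (HP : 0 < lprod (fun k : nat => z + INR k) (seq 0 (S n))).
  { apply lprod_pos. intros x _. pose proof (pos_INR x); lra. }
  rewrite Nat.add_0_l, S_INR.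

  change (fact (S n)) with (S n * fact n)%nat. rewrite mult_INR, S_INR.
  unfold Rpower.
  replace (z * ln (INR n + 1)) with (z * ln (INR n) + z * (ln (INR n + 1) - ln (INR n))) by ring.
  rewrite exp_plus. pose proof (pos_INR n). field. split; lra. Qed.

Lemma exp_le_mono x y : x <= y -> exp x <= exp y.
Proof. intros H; destruct (Rle_lt_or_eq_dec _ _ H) as [H1|H1].
  left; apply exp_increasing; auto. subst; lra. Qed.

Lemma D_bounds n : (1 <= n)%nat ->
  / (INR n + 1) <= ln (INR n + 1) - ln (INR n) <= / INR n.
Proof. intros Hn. assert (Hn' : 1 <= INR n) by (apply (le_INR 1); auto).
  split.
  - assert (H1 : INR n <= (INR n + 1) * exp (- / (INR n + 1))).
    { pose proof (exp_ineq1_le (- / (INR n + 1))).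
      apply Rle_trans with ((INR n + 1) * (1 + - / (INR n + 1))).
      right; field; lra. apply Rmult_le_compat_l; lra. }
    apply ln_le in H1; [|lra]. rewrite ln_mult, ln_exp in H1; [lra|lra|apply exp_pos].
  - assert (H1 : INR n + 1 <= INR n * exp (/ INR n)).
    { pose proof (exp_ineq1_le (/ INR n)).
      apply Rle_trans with (INR n * (1 + / INR n)).
      right; field; lra. apply Rmult_le_compat_l; lra. }
    apply ln_le in H1; [|lra]. rewrite ln_mult, ln_exp in H1; [lra|lra|apply exp_pos].
Qed.

Definition rr z n := (INR n + 1) * exp (z * (ln (INR n + 1) - ln (INR n))) / (z + INR n + 1).

Lemma rr_ge1 z n : 0 <= z -> (1 <= n)%nat -> 1 <= rr z n.
Proof. intros Hz Hn. pose proof (D_bounds n Hn) as [D1 D2]. pose proof (pos_INR n).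
  unfold rr. set (D := ln (INR n + 1) - ln (INR n)) in *.
  pose proof (exp_ineq1_le (z * D)).
  assert (z / (INR n + 1) <= z * D).
  { unfold Rdiv; apply Rmult_le_compat_l; auto. }
  apply Rmult_le_reg_r with (z + INR n + 1); [lra|].
  unfold Rdiv; rewrite Rmult_assoc, Rinv_l, Rmult_1_r by lra.
  apply Rle_trans with ((INR n + 1) * (1 + z / (INR n + 1))).
  right; field; lra. apply Rmult_le_compat_l; lra. Qed.

Lemma rr_le z n : 0 <= z -> (1 <= n)%nat -> rr z n <= exp (z * (z + 1) * (/ INR n - / (INR n + 1))).
Proof. intros Hz Hn. pose proof (D_bounds n Hn) as [D1 D2].
  assert (Hn' : 1 <= INR n) by (apply (le_INR 1); auto).
  unfold rr. set (D := ln (INR n + 1) - ln (INR n)) in *.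
  assert (E1 : exp (z * D) <= exp (z / INR n)).
  { apply exp_le_mono. unfold Rdiv; apply Rmult_le_compat_l; auto. }
  assert (E2 : (INR n + 1) / (z + INR n + 1) <= exp (- z / (z + INR n + 1))).
  { eapply Rle_trans; [|apply exp_ineq1_le]. right; field; lra. }
  apply Rle_trans with (exp (z / INR n) * exp (- z / (z + INR n + 1))).
  { replace ((INR n + 1) * exp (z * D) / (z + INR n + 1)) with
      (exp (z * D) * ((INR n + 1) / (z + INR n + 1))) by (field; lra).
    apply Rmult_le_compat; auto; try (left; apply exp_pos).
    apply Rlt_le, Rdiv_lt_0_compat; lra. }
  rewrite <- exp_plus. apply exp_le_mono.
  replace (z / INR n + - z / (z + INR n + 1)) with (z * (z + 1) * / (INR n * (z + INR n + 1)))
    by (field; lra).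
  replace (/ INR n - / (INR n + 1)) with (/ (INR n * (INR n + 1))) by (field; lra).
  apply Rmult_le_compat_l. nra.
  apply Rinv_le_contravar; nra. Qed.

Lemma Gs_tele z K N j : 0 < z -> z * (z + 1) <= K -> (1 <= N)%nat ->
  Gs z N <= Gs z (N + j) <= Gs z N * exp (K * (/ INR N - / INR (N + j))).
Proof. intros Hz HK HN. induction j as [|j IH].
  - rewrite Nat.add_0_r, Rminus_diag, Rmult_0_r, exp_0. lra.
  - rewrite Nat.add_succ_r, (Gs_S z (N+j) Hz ltac:(lia)). fold (rr z (N + j)).
    pose proof (rr_ge1 z (N+j) (Rlt_le _ _ Hz) ltac:(lia)).
    pose proof (rr_le z (N+j) (Rlt_le _ _ Hz) ltac:(lia)).
    pose proof (Gs_pos z (N+j) Hz).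
    assert (HI : 1 <= INR (N + j)) by (apply (le_INR 1); lia).
    split.
    + destruct IH; nra.
    + apply Rle_trans with (Gs z N * exp (K * (/ INR N - / INR (N + j))) * exp (K * (/ INR (N+j) - / (INR (N+j) + 1)))).
      * apply Rmult_le_compat; try lra.
        eapply Rle_trans; [apply H0|]. apply exp_le_mono. apply Rmult_le_compat_r; auto.
        assert (/ (INR (N + j) + 1) <= / INR (N + j)) by (apply Rinv_le_contravar; lra). lra.
      * rewrite Rmult_assoc, <- exp_plus, S_INR. right; f_equal; f_equal. ring.
Qed.

Lemma Gs_conv_pos z : 0 < z -> is_lim_seq (Gs z) (Gamma z).
Proof. intros Hz.
  assert (Hex : ex_finite_lim_seq (fun n => Gs z (S n))).
  { apply ex_finite_lim_seq_incr with (M := Gs z 1 * exp (z * (z + 1))).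
    - intros n. rewrite (Gs_S z (S n) Hz ltac:(lia)). fold (rr z (S n)).
      pose proof (rr_ge1 z (S n) (Rlt_le _ _ Hz) ltac:(lia)). pose proof (Gs_pos z (S n) Hz). nra.
    - intros n. destruct (Gs_tele z (z * (z+1)) 1 n Hz (Rle_refl _) (le_n _)) as [_ H].
      eapply Rle_trans; [apply H|]. apply Rmult_le_compat_l. left; apply Gs_pos; auto.
      apply exp_le_mono.
      assert (0 < / INR (1 + n)). { apply Rinv_0_lt_compat. apply (lt_INR 0); lia. }
      assert (0 < z*(z+1)) by nra. change (INR 1) with 1. rewrite Rinv_1. nra. }
  destruct Hex as [l Hl]. apply is_lim_seq_incr_1 in Hl.
  unfold Gamma. fold (Gs z). rewrite (is_lim_seq_unique _ _ Hl). exact Hl. Qed.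

Lemma Gs_sandwich z K N : 0 < z -> z * (z + 1) <= K -> (1 <= N)%nat ->
  Gs z N <= Gamma z <= Gs z N * exp (K / INR N).
Proof. intros Hz HK HN. pose proof (Gs_conv_pos z Hz) as Hl.
  apply (is_lim_seq_incr_n _ N) in Hl.
  assert (HKp : 0 <= K) by nra.
  split.
  - assert (H := is_lim_seq_le (fun _ => Gs z N) (fun n => Gs z (n + N)) (Gs z N) (Gamma z)).
    simpl in H. apply H; auto. intros n. rewrite Nat.add_comm. apply (Gs_tele z K N n Hz HK HN).
    apply is_lim_seq_const.
  - assert (H := is_lim_seq_le (fun n => Gs z (n + N)) (fun _ => Gs z N * exp (K / INR N)) (Gamma z) (Gs z N * exp (K / INR N))).
    simpl in H. apply H; auto. intros n. rewrite Nat.add_comm.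
    destruct (Gs_tele z K N n Hz HK HN) as [_ H2]. eapply Rle_trans; [apply H2|].
    apply Rmult_le_compat_l. left; apply Gs_pos; auto. apply exp_le_mono.
    unfold Rdiv. apply Rmult_le_compat_l; auto.
    assert (0 < / INR (N + n)). { apply Rinv_0_lt_compat. apply (lt_INR 0); lia. } lra.
    apply is_lim_seq_const.
Qed.

Lemma lprod_lim {A} (l : list A) (g : nat -> A -> R) (gl : A -> R) :
  (forall a, In a l -> is_lim_seq (fun s => g s a) (gl a)) ->
  is_lim_seq (fun s => lprod (g s) l) (lprod gl l).
Proof. induction l as [|b l IH]; intros H; unfold lprod in *; simpl.
  apply is_lim_seq_const. apply is_lim_seq_mult'; auto with datatypes. Qed.

Lemma Gs_cont N u w : 0 < w -> is_lim_seq u w -> is_lim_seq (fun s => Gs (u s) N) (Gs w N).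
Proof. intros Hw Hu. unfold Gs. apply is_lim_seq_div'.
  - apply is_lim_seq_mult'. apply is_lim_seq_const. unfold Rpower.
    apply (is_lim_seq_continuous exp (fun s => u s * ln (INR N))).
    apply derivable_continuous_pt, derivable_pt_exp.
    apply is_lim_seq_mult'; auto. apply is_lim_seq_const.
  - apply lprod_lim. intros a _. apply is_lim_seq_plus'; auto. apply is_lim_seq_const.
  - apply lprod_neq0. intros x _. pose proof (pos_INR x); lra. Qed.

Lemma Gamma_pos z : 0 < z -> 0 < Gamma z.
Proof. intros Hz. destruct (Gs_sandwich z (z*(z+1)) 1 Hz (Rle_refl _) (le_n _)).
  pose proof (Gs_pos z 1 Hz). lra. Qed.

Lemma exists_N_exp K d : 0 <= K -> 0 < d -> exists N, (1 <= N)%nat /\ exp (K / INR N) <= 1 + d.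
Proof. intros HK Hd. assert (Hl : 0 < ln (1 + d)).
  { rewrite <- ln_1. apply ln_increasing; lra. }
  assert (Hx : 0 <= K / ln (1 + d)) by (apply Rdiv_le_0_compat; lra).
  destruct (nfloor_ex _ Hx) as [n [_ Hn]]. exists (S n). split. lia.
  rewrite S_INR. rewrite <- (exp_ln (1 + d)) by lra. apply exp_le_mono.
  pose proof (pos_INR n).
  apply Rmult_le_reg_r with ((INR n + 1) / ln (1 + d)). apply Rdiv_lt_0_compat; lra.
  replace (K / (INR n + 1) * ((INR n + 1) / ln (1 + d))) with (K / ln (1 + d)) by (field; lra).
  replace (ln (1 + d) * ((INR n + 1) / ln (1 + d))) with (INR n + 1) by (field; lra). lra. Qed.

Lemma Gamma_cont w u : 0 < w -> is_lim_seq u w -> is_lim_seq (fun s => Gamma (u s)) (Gamma w).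
Proof. intros Hw Hu. pose proof (Gamma_pos w Hw) as HGw.
  set (K := (w + 1) * (w + 2)). set (B := Gamma w + 1).
  apply is_lim_seq_spec. intros eps.
  set (d := eps / (4 * B)).
  assert (Hd : 0 < d). { unfold d, B. apply Rdiv_lt_0_compat. apply cond_pos. lra. }
  destruct (exists_N_exp K d) as [N [HN HE]]. unfold K; nra. auto.
  set (eta := Rmin 1 (eps / 4)).
  assert (Heta : 0 < eta). { unfold eta. apply Rmin_glb_lt. lra. pose proof (cond_pos eps); lra. }
  pose proof (Gs_cont N u w Hw Hu) as HG. apply is_lim_seq_spec in HG.
  pose proof Hu as Hu'. apply is_lim_seq_spec in Hu'.
  assert (Hm : 0 < Rmin w 1) by (apply Rmin_glb_lt; lra).
  specialize (HG (mkposreal eta Heta)). specialize (Hu' (mkposreal _ Hm)).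
  destruct HG as [N1 HG]. destruct Hu' as [N2 Hu']. exists (max N1 N2). intros s Hs.
  specialize (HG s ltac:(lia)). specialize (Hu' s ltac:(lia)). simpl in HG, Hu'.
  pose proof (Rmin_l w 1). pose proof (Rmin_r w 1).
  apply Rabs_def2 in Hu'. destruct Hu' as [Hu1 Hu2].
  assert (Hz : 0 < u s) by lra.
  assert (HKz : u s * (u s + 1) <= K) by (unfold K; nra).
  assert (HKw : w * (w + 1) <= K) by (unfold K; nra).
  destruct (Gs_sandwich (u s) K N Hz HKz HN) as [S1 S2].
  destruct (Gs_sandwich w K N Hw HKw HN) as [T1 T2].
  apply Rabs_def2 in HG. destruct HG as [G1 G2].
  pose proof (Gs_pos (u s) N Hz). pose proof (Gs_pos w N Hw).
  assert (eta <= 1) by apply Rmin_l. assert (eta <= eps / 4) by apply Rmin_r.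
  assert (HB : 0 < B) by (unfold B; lra).
  assert (Hd4 : 4 * B * d = eps) by (unfold d; field; lra).
  assert (A1 : Gamma (u s) - Gs (u s) N <= B * d).
  { apply Rle_trans with (Gs (u s) N * d). nra. apply Rmult_le_compat_r; [lra|]. unfold B. lra. }
  assert (A2 : Gamma w - Gs w N <= B * d).
  { apply Rle_trans with (Gs w N * d). nra. apply Rmult_le_compat_r; [lra|]. unfold B. lra. }
  apply Rabs_def1; lra. Qed.

Lemma nonpos_k z k : ~ nonpos_int z -> z + INR k <> 0.
Proof. intros H E. apply H. exists k. lra. Qed.

Lemma nonpos_S z : ~ nonpos_int z -> ~ nonpos_int (z + 1).
Proof. intros H [k Hk]. apply H. exists (S k). rewrite S_INR. lra. Qed.

Lemma lprod_seq0_S (g : nat -> R) n : lprod g (seq 0 (S n)) = g 0%nat * lprod (fun k => g (S k)) (seq 0 n).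
Proof. simpl seq. rewrite lprod_cons, lprod_seq_shift. reflexivity. Qed.

Lemma Gs_shift z n : ~ nonpos_int z -> (1 <= n)%nat ->
  Gs z n = Gs (z + 1) n * ((z + INR n + 1) / (INR n * z)).
Proof. intros Hz Hn. assert (Hn' : 1 <= INR n) by (apply (le_INR 1); auto).
  pose proof (nonpos_k z 0 Hz) as Hz0. simpl INR in Hz0. rewrite Rplus_0_r in Hz0.
  unfold Gs. rewrite Rpower_plus, Rpower_1 by lra.
  pose proof (lprod_seq0_S (fun k => z + INR k) (S n)) as E1.
  rewrite lprod_seq_S in E1. rewrite Nat.add_0_l, S_INR in E1. change (INR 0) with 0 in E1.
  rewrite (lprod_ext (fun k => z + INR (S k)) (fun k => z + 1 + INR k)) in E1
    by (intros; rewrite S_INR; ring).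
  rewrite Rplus_0_r in E1.
  assert (P0 : lprod (fun k => z + INR k) (seq 0 (S n)) <> 0).
  { apply lprod_neq0. intros. apply nonpos_k; auto. }
  assert (P1 : lprod (fun k => z + 1 + INR k) (seq 0 (S n)) <> 0).
  { apply lprod_neq0. intros. rewrite Rplus_assoc, (Rplus_comm 1), <- S_INR. apply nonpos_k; auto. }
  assert (Hzn : z + INR n + 1 <> 0). { rewrite Rplus_assoc, <- S_INR. apply nonpos_k; auto. }
  replace (lprod (fun k => z + 1 + INR k) (seq 0 (S n))) with
    (lprod (fun k => z + INR k) (seq 0 (S n)) * (z + (INR n + 1)) / z).
  field. repeat split; auto; try lra.
  rewrite E1. field. auto. Qed.

Lemma inv_n_lim : is_lim_seq (fun n => / INR n) 0.
Proof. apply (is_lim_seq_inv INR p_infty is_lim_seq_INR). discriminate. Qed.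

Lemma Gs_down z (L : R) : ~ nonpos_int z -> is_lim_seq (Gs (z + 1)) L -> is_lim_seq (Gs z) (L / z).
Proof. intros Hz HL.
  pose proof (nonpos_k z 0 Hz) as Hz0. simpl INR in Hz0. rewrite Rplus_0_r in Hz0.
  apply is_lim_seq_ext_loc with (fun n => Gs (z + 1) n * (/ z * (1 + (z + 1) * / INR n))).
  { exists 1%nat. intros n Hn. rewrite (Gs_shift z n Hz Hn).
    assert (1 <= INR n) by (apply (le_INR 1); auto). f_equal. field. lra. }
  replace (L / z) with (L * (/ z * (1 + (z + 1) * 0))) by (field; auto).
  apply is_lim_seq_mult'; auto. apply is_lim_seq_mult'. apply is_lim_seq_const.
  apply is_lim_seq_plus'. apply is_lim_seq_const. apply is_lim_seq_mult'. apply is_lim_seq_const.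
  apply inv_n_lim. Qed.

Lemma Gs_conv z : ~ nonpos_int z -> is_lim_seq (Gs z) (Gamma z).
Proof. intros Hz.
  assert (H : forall j z, ~ nonpos_int z -> 0 < z + INR j -> is_lim_seq (Gs z) (Gamma z)).
  { clear. induction j as [|j IH]; intros z Hz Hp.
    - apply Gs_conv_pos. simpl in Hp; lra.
    - assert (H1 := IH (z + 1) (nonpos_S z Hz) ltac:(rewrite S_INR in Hp; lra)).
      apply Gs_down in H1; auto. rewrite Gamma_Gs. rewrite (is_lim_seq_unique _ _ H1). auto. }
  destruct (nfloor_ex (Rabs z) (Rabs_pos z)) as [n [_ Hn]].
  apply (H (S n)); auto. rewrite S_INR. pose proof (Rle_abs (- z)). rewrite Rabs_Ropp in H0. lra. Qed.

Lemma Gamma_rec z : ~ nonpos_int z -> Gamma (z + 1) = z * Gamma z.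
Proof. intros Hz. pose proof (nonpos_k z 0 Hz) as Hz0. simpl INR in Hz0. rewrite Rplus_0_r in Hz0.
  pose proof (Gs_down z _ Hz (Gs_conv (z + 1) (nonpos_S z Hz))) as H1.
  pose proof (Gs_conv z Hz) as H2.
  assert (E : Gamma (z + 1) / z = Gamma z).
  { apply is_lim_seq_unique in H1. apply is_lim_seq_unique in H2. rewrite H1 in H2. injection H2; auto. }
  rewrite <- E. field; auto. Qed.

Lemma lprod_fact m : lprod (fun k => 1 + INR k) (seq 0 m) = INR (fact m).
Proof. induction m as [|m IH]. unfold lprod; simpl; ring.
  rewrite lprod_seq_S, IH. change (fact (S m)) with (S m * fact m)%nat.
  rewrite mult_INR, S_INR. simpl (0 + m)%nat. ring. Qed.

Lemma Gamma_1 : Gamma 1 = 1.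
Proof. pose proof (Gs_conv_pos 1 ltac:(lra)) as H.
  assert (H2 : is_lim_seq (Gs 1) 1).
  { apply is_lim_seq_ext_loc with (fun n => 1 / (1 + / INR n)).
    { exists 1%nat. intros n Hn. assert (1 <= INR n) by (apply (le_INR 1); auto).
      unfold Gs. rewrite Rpower_1 by lra.
      rewrite lprod_fact. change (fact (S n)) with (S n * fact n)%nat.
      rewrite mult_INR, S_INR. pose proof (INR_fact_lt_0 n). field. lra. }
    assert (Hx : is_lim_seq (fun n => 1 / (1 + / INR n)) (1 / (1 + 0))).
    { apply is_lim_seq_div'. apply is_lim_seq_const. apply (is_lim_seq_plus' (fun _ => 1) (fun n => / INR n) 1 0).
      apply is_lim_seq_const. apply inv_n_lim. lra. }
    replace (1 / (1 + 0)) with 1 in Hx by field. exact Hx. }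
  apply is_lim_seq_unique in H. apply is_lim_seq_unique in H2. rewrite H in H2. injection H2; auto. Qed.

Lemma pos_not_nonpos z : 0 < z -> ~ nonpos_int z.
Proof. intros H [k Hk]. pose proof (pos_INR k). lra. Qed.

Lemma Gamma_nat j : Gamma (INR (S j)) = INR (fact j).
Proof. induction j as [|j IH]. simpl. apply Gamma_1.
  rewrite (S_INR (S j)), Gamma_rec, IH. change (fact (S j)) with (S j * fact j)%nat.
  rewrite mult_INR. ring. apply pos_not_nonpos. apply (lt_INR 0); lia. Qed.

Lemma Gamma_shift z j : ~ nonpos_int z ->
  Gamma (z + INR j) = Gamma z * lprod (fun k => z + INR k) (seq 0 j).
Proof. intros Hz. induction j as [|j IH]. simpl. rewrite Rplus_0_r. unfold lprod; simpl; ring.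
  rewrite S_INR, <- Rplus_assoc, Gamma_rec, IH, lprod_seq_S. simpl (0 + j)%nat. ring.
  intros [k Hk]. apply Hz. exists (k + j)%nat. rewrite plus_INR. lra. Qed.

Lemma pole_lim m u : (forall s, ~ nonpos_int (u s)) -> is_lim_seq u (- INR m) ->
  is_lim_seq (fun s => (u s + INR m) * Gamma (u s))
    (/ lprod (fun k => - INR m + INR k) (seq 0 m)).
Proof. intros Hu Hl.
  assert (Pnz : lprod (fun k => - INR m + INR k) (seq 0 m) <> 0).
  { apply lprod_neq0. intros k Hk. apply in_seq in Hk.
    assert (INR k < INR m) by (apply lt_INR; lia). lra. }
  apply is_lim_seq_ext with (fun s => Gamma (u s + INR (S m)) / lprod (fun k => u s + INR k) (seq 0 m)).
  { intros s. rewrite Gamma_shift, lprod_seq_S by auto. simpl (0 + m)%nat.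
    field. apply lprod_neq0. intros. apply nonpos_k; auto. }
  replace (/ lprod (fun k => - INR m + INR k) (seq 0 m)) with
    (Gamma 1 / lprod (fun k => - INR m + INR k) (seq 0 m)) by (rewrite Gamma_1; field; auto).
  apply is_lim_seq_div'; auto.
  - replace 1 with (- INR m + INR (S m)) by (rewrite S_INR; ring).
    apply Gamma_cont. rewrite S_INR; lra.
    apply is_lim_seq_plus'; auto. apply is_lim_seq_const.
  - apply lprod_lim. intros. apply is_lim_seq_plus'; auto. apply is_lim_seq_const. Qed.

Lemma lprod_neg_pole m : lprod (fun k => - INR m + INR k) (seq 0 m) = (-1) ^ m * INR (fact m).
Proof. induction m as [|m IH]. unfold lprod; simpl; ring.
  rewrite lprod_seq0_S. rewrite (lprod_ext _ (fun k => - INR m + INR k)) by (intros; rewrite !S_INR; ring).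
  rewrite IH. change (fact (S m)) with (S m * fact m)%nat. rewrite mult_INR, S_INR. simpl. ring. Qed.

Lemma lprod_seq_off (g : nat -> R) s m : lprod g (seq s m) = lprod (fun k => g (s + k)%nat) (seq 0 m).
Proof. revert g. induction s as [|s IH]; intros g. reflexivity.
  rewrite lprod_seq_shift, IH. reflexivity. Qed.

Lemma lprod_neg_fact m : lprod (fun k => - (1 + INR k)) (seq 0 m) = (-1) ^ m * INR (fact m).
Proof. induction m as [|m IH]. unfold lprod; simpl; ring.
  rewrite lprod_seq_S, IH. change (fact (S m)) with (S m * fact m)%nat. rewrite mult_INR, S_INR. simpl (0+m)%nat. simpl pow. ring. Qed.

Lemma lprod_upper x m : lprod (fun k => INR x - INR k) (seq (S x) m) = (-1) ^ m * INR (fact m).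
Proof. rewrite lprod_seq_off, <- lprod_neg_fact. apply lprod_ext. intros k _.
  rewrite plus_INR, S_INR. ring. Qed.

Lemma lprod_ff j i : lprod (fun k => INR (j + i) - INR k) (seq 0 i) * INR (fact j) = INR (fact (j + i)).
Proof. induction i as [|i IH]. rewrite Nat.add_0_r. unfold lprod; simpl; ring.
  rewrite lprod_seq0_S. rewrite (lprod_ext _ (fun k => INR (j + i) - INR k)) by (intros; rewrite !S_INR, Nat.add_succ_r, S_INR; ring).
  rewrite Rmult_assoc, IH, Nat.add_succ_r. change (fact (S (j + i))) with (S (j + i) * fact (j + i))%nat.
  rewrite mult_INR. simpl INR at 2. ring. Qed.

Lemma nonpos_plus_nat x d : ~ nonpos_int d -> ~ nonpos_int (INR x + d).
Proof. intros H [k Hk]. apply H. exists (k + x)%nat. rewrite plus_INR. lra. Qed.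

Lemma part1 a c F1 F2 : (c <= 0)%Z -> finset_pos F1 -> finset_pos F2 -> condC c F1 F2 ->
  forall cs : nat -> R, (forall s, ~ nonpos_int (cs s)) -> is_lim_seq cs (IZR c) ->
  forall x : nat, is_lim_seq (fun s => rho F1 F2 a (cs s) x) (nu c F1 F2 a x).
Proof. intros Hc HF1 HF2 HC cs Hcs Hl x.
  set (n := Z.to_nat (- c)).
  assert (Ec : IZR c = - INR n).
  { unfold n. rewrite INR_IZR_INZ, Z2Nat.id by lia. rewrite opp_IZR. ring. }
  pose proof (perm_main c F1 F2 Hc HF1 HF2 HC) as Perm. fold n in Perm.
  assert (E1 : lprod (fun h => INR x - IZR h) (F1Z F1) = lprod (fun f => INR x - INR f) F1).
  { unfold F1Z. rewrite lprod_map. apply lprod_ext. intros. rewrite <- INR_IZR_INZ. reflexivity. }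
  assert (E2 : forall l, lprod (fun h => INR x - IZR h) (shiftF2 c l) = lprod (fun f => INR x + IZR c + INR f) l).
  { intros l. unfold shiftF2. rewrite lprod_map. apply lprod_ext. intros.
    rewrite minus_IZR, opp_IZR, <- INR_IZR_INZ. ring. }
  assert (ER : lprod (fun h => INR x - IZR h) (rangeZ n) = lprod (fun k => INR x - INR k) (seq 0 (S n))).
  { unfold rangeZ. rewrite lprod_map. apply lprod_ext. intros. rewrite <- INR_IZR_INZ. reflexivity. }
  assert (Hfx : INR (fact x) <> 0) by apply INR_fact_neq_0.
  unfold nu. destruct (in_dec Nat.eq_dec x F1) as [Hx|Hx].
  { apply is_lim_seq_ext with (fun _ => 0). intros s. unfold rho.
    rewrite (lprod_zero _ F1 x Hx) by ring. ring. apply is_lim_seq_const. }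
  destruct (lt_eq_lt_dec x n) as [[Hxn|Hxn]|Hxn].
  - (* pole case *)
    destruct (HC (Z.of_nat x) ltac:(lia)) as [HI|HI].
    { exfalso. apply in_F1Z in HI. destruct HI as [f [Hf Ef]]. apply Hx.
      replace x with f by lia. auto. }
    apply in_G in HI. destruct HI as [f0 [Hf0 Ef0]].
    set (m := f0). assert (Hnm : n = (x + m)%nat) by (unfold m, n; lia).
    destruct (in_split _ _ Hf0) as [l1 [l2 EF2]].
    set (F2' := l1 ++ l2).
    assert (PF2 : Permutation F2 (f0 :: F2')) by (rewrite EF2; apply Permutation_sym, Permutation_middle).
    assert (PG : Permutation (shiftF2 c F2) (Z.of_nat x :: shiftF2 c F2')).
    { unfold shiftF2. replace (Z.of_nat x) with (- c - Z.of_nat f0)%Z by lia.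
      apply (Permutation_map (fun f => (- c - Z.of_nat f)%Z) PF2). }
    assert (ERng : rangeZ n = map Z.of_nat (seq 0 x) ++ Z.of_nat x :: map Z.of_nat (seq (S x) m)).
    { unfold rangeZ. replace (S n) with (x + S m)%nat by lia. rewrite seq_app, map_app. reflexivity. }
    assert (Perm' : Permutation (F1Z F1 ++ shiftF2 c F2')
       ((Hset c F1 F2 ++ map Z.of_nat (seq 0 x)) ++ map Z.of_nat (seq (S x) m))).
    { apply Permutation_app_inv with (a := Z.of_nat x).
      rewrite <- app_assoc, <- ERng.
      eapply Permutation_trans; [|apply Perm].
      apply Permutation_app_head. apply Permutation_sym; auto. }
    apply (lprod_perm (fun h => INR x - IZR h)) in Perm'.
    rewrite !lprod_app, E1, E2, !lprod_map in Perm'.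
    rewrite (lprod_ext (fun x0 => INR x - IZR (Z.of_nat x0)) (fun k => INR x - INR k)) in Perm'
      by (intros; rewrite <- INR_IZR_INZ; reflexivity).
    rewrite (lprod_ext (fun x0 => INR x - IZR (Z.of_nat x0)) (fun k => INR x - INR k)) in Perm'
      by (intros; rewrite <- INR_IZR_INZ; reflexivity).
    rewrite lprod_upper in Perm'.
    pose proof (lprod_ff 0 x) as Ff. rewrite Nat.add_0_l in Ff. simpl (fact 0) in Ff. simpl INR in Ff.
    rewrite Rmult_1_r in Ff. rewrite Ff in Perm'.
    set (P1 := lprod (fun f => INR x - INR f) F1) in *.
    set (P2' := fun d => lprod (fun f => INR x + d + INR f) F2').
    apply is_lim_seq_ext with (fun s => (P1 * P2' (cs s) * (a ^ x / INR (fact x))) *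
                                   ((INR x + cs s + INR m) * Gamma (INR x + cs s))).
    { intros s. unfold rho. fold P1. rewrite (lprod_perm _ _ _ PF2), lprod_cons. unfold P2'. unfold m. field. auto. }
    replace (lprod (fun h => INR x - IZR h) (Hset c F1 F2) * a ^ x) with
      ((P1 * P2' (IZR c) * (a ^ x / INR (fact x))) * / lprod (fun k => - INR m + INR k) (seq 0 m)).
    + apply is_lim_seq_mult'.
      * apply is_lim_seq_mult'. apply is_lim_seq_mult'. apply is_lim_seq_const.
        unfold P2'. apply lprod_lim. intros. apply is_lim_seq_plus'. apply is_lim_seq_plus'.
        apply is_lim_seq_const. auto. apply is_lim_seq_const. apply is_lim_seq_const.
      * apply (pole_lim m (fun s => INR x + cs s)).
        intros s; apply nonpos_plus_nat; auto.
        replace (- INR m) with (INR x + IZR c) by (rewrite Ec, Hnm, plus_INR; ring).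
        apply is_lim_seq_plus'. apply is_lim_seq_const. auto.
    + rewrite lprod_neg_pole. unfold P2'. rewrite Perm'.
      pose proof (pow_nonzero (-1) m ltac:(lra)). pose proof (INR_fact_neq_0 m).
      field. auto.
  - exfalso. destruct (HC (Z.of_nat x) ltac:(lia)) as [HI|HI].
    + apply in_F1Z in HI. destruct HI as [f [Hf Ef]]. apply Hx. replace x with f by lia. auto.
    + apply in_G in HI. destruct HI as [f [Hf Ef]]. destruct HF2 as [_ P2].
      rewrite Forall_forall in P2. specialize (P2 f Hf). lia.
  - set (j := (x - S n)%nat). assert (Hxj : x = (j + S n)%nat) by (unfold j; lia).
    apply (lprod_perm (fun h => INR x - IZR h)) in Perm.
    rewrite !lprod_app, E1, E2, ER in Perm.
    pose proof (lprod_ff j (S n)) as Ff. rewrite <- Hxj in Ff.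
    assert (EG : INR x + IZR c = INR (S j)) by (rewrite Ec, Hxj, plus_INR, !S_INR; ring).
    unfold rho.
    replace (lprod (fun h => INR x - IZR h) (Hset c F1 F2) * a ^ x) with
      (lprod (fun f => INR x - INR f) F1 * lprod (fun f => INR x + IZR c + INR f) F2 *
       (a ^ x * Gamma (INR x + IZR c) / INR (fact x))).
    + apply is_lim_seq_mult'. apply is_lim_seq_mult'. apply is_lim_seq_const.
      apply lprod_lim. intros. apply is_lim_seq_plus'. apply is_lim_seq_plus'.
      apply is_lim_seq_const. auto. apply is_lim_seq_const.
      apply is_lim_seq_div'. apply is_lim_seq_mult'. apply is_lim_seq_const.
      apply Gamma_cont. rewrite EG. apply (lt_INR 0); lia.
      apply is_lim_seq_plus'. apply is_lim_seq_const. auto. apply is_lim_seq_const. auto.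
    + rewrite Perm, EG, Gamma_nat, <- Ff. field. split; [apply INR_fact_neq_0|]. intro E0. rewrite E0, Rmult_0_l in Ff. apply Hfx; auto.
Qed.

Lemma not_nonpos_frac c e : 0 < e < 1 -> ~ nonpos_int (IZR c + e).
Proof. intros He [k Hk].
  assert (E : e = IZR (- Z.of_nat k - c)) by (rewrite minus_IZR, opp_IZR, <- INR_IZR_INZ; lra).
  rewrite E in He. destruct He as [H1 H2]. apply lt_IZR in H1. apply lt_IZR in H2. lia. Qed.

Lemma max_list_ge (l : list nat) f : In f l -> (f <= fold_right max 0 l)%nat.
Proof. induction l as [|b l IH]; simpl; [tauto|]. intros [<-|H]. lia. specialize (IH H). lia. Qed.

Lemma ev_all (P : nat -> nat -> Prop) B : (forall x, (x < B)%nat -> exists N, forall s, (N <= s)%nat -> P x s) ->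
  exists N, forall s, (N <= s)%nat -> forall x, (x < B)%nat -> P x s.
Proof. induction B as [|B IH]; intros H. exists 0%nat. intros; lia.
  destruct IH as [N1 H1]. intros; apply H; lia.
  destruct (H B ltac:(lia)) as [N2 H2]. exists (max N1 N2). intros s Hs x Hx.
  destruct (Nat.eq_dec x B). subst; apply H2; lia. apply H1; lia. Qed.

Lemma part2 a c F1 F2 : 0 < a < 1 -> (c <= 0)%Z -> finset_pos F1 -> finset_pos F2 -> condC c F1 F2 ->
  positive_measure (nu c F1 F2 a) ->
   exists cs : nat -> R,
     (forall s, ~ nonpos_int (cs s)) /\ is_lim_seq cs (IZR c) /\
     forall s, positive_measure (rho F1 F2 a (cs s)).
Proof. intros Ha Hc HF1 HF2 HC [Hnu _].
  set (n := Z.to_nat (- c)).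
  assert (Ec : IZR c = - INR n).
  { unfold n. rewrite INR_IZR_INZ, Z2Nat.id by lia. rewrite opp_IZR. ring. }
  set (cs0 := fun s : nat => IZR c + / INR (s + 2)).
  assert (Hfr : forall s, 0 < / INR (s + 2) < 1).
  { intros s. assert (2 <= INR (s + 2)) by (rewrite plus_INR; pose proof (pos_INR s); simpl; lra).
    split. apply Rinv_0_lt_compat; lra. rewrite <- Rinv_1. apply Rinv_lt_contravar; lra. }
  assert (Hnp : forall s, ~ nonpos_int (cs0 s)) by (intros; apply not_nonpos_frac; auto).
  assert (Hlim : is_lim_seq cs0 (IZR c)).
  { replace (IZR c) with (IZR c + 0) by ring. apply is_lim_seq_plus'. apply is_lim_seq_const.
    pose proof inv_n_lim as H0. apply (is_lim_seq_incr_n _ 2) in H0. exact H0. }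
  set (B := S (max n (fold_right max 0%nat F1))).
  assert (Hbig : forall x d, (B <= x)%nat -> IZR c < d < IZR c + 1 -> 0 < rho F1 F2 a d x).
  { intros x d Hx Hd. unfold rho.
    assert (Hxn : INR n + 1 <= INR x) by (rewrite <- S_INR; apply le_INR; unfold B in Hx; lia).
    assert (Hxd : 0 < INR x + d) by lra.
    apply Rmult_lt_0_compat. apply Rmult_lt_0_compat.
    - apply lprod_pos. intros f Hf. apply max_list_ge in Hf.
      assert (INR f < INR x) by (apply lt_INR; unfold B in Hx; lia). lra.
    - apply lprod_pos. intros f _. pose proof (pos_INR f). lra.
    - unfold Rdiv. apply Rmult_lt_0_compat. apply Rmult_lt_0_compat.
      apply pow_lt; lra. apply Gamma_pos; auto. apply Rinv_0_lt_compat, INR_fact_lt_0. }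
  assert (Hsmall : forall x, (x < B)%nat -> exists N, forall s, (N <= s)%nat -> 0 <= rho F1 F2 a (cs0 s) x).
  { intros x _. destruct (in_dec Nat.eq_dec x F1) as [Hx|Hx].
    - exists 0%nat. intros s _. unfold rho. rewrite (lprod_zero _ F1 x Hx) by ring. lra.
    - pose proof (part1 a c F1 F2 Hc HF1 HF2 HC cs0 Hnp Hlim x) as HL.
      assert (Hpos : 0 < nu c F1 F2 a x).
      { destruct (Hnu x) as [H|H]; auto. exfalso. revert H. unfold nu.
        destruct (in_dec Nat.eq_dec x F1) as [H'|H']; [tauto|].
        apply not_eq_sym, Rmult_integral_contrapositive_currified.
        - apply lprod_neq0. intros h Hh E. assert (Eh : h = Z.of_nat x).
          { apply eq_IZR. rewrite <- INR_IZR_INZ. lra. }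
          subst h. apply in_Hset in Hh.
          destruct Hh as [[[HI|HI] HN]|[HI _]].
          + apply in_F1Z in HI. destruct HI as [f [Hf Ef]]. apply Hx. replace x with f by lia. auto.
          + apply in_G in HI. destruct HI as [f [Hf Ef]]. destruct HF2 as [_ P2].
            rewrite Forall_forall in P2. specialize (P2 f Hf). lia.
          + apply in_F1Z in HI. destruct HI as [f [Hf Ef]]. apply Hx. replace x with f by lia. auto.
        - apply pow_nonzero; lra. }
      apply is_lim_seq_spec in HL. destruct (HL (mkposreal _ Hpos)) as [N HN].
      exists N. intros s Hs. specialize (HN s Hs). simpl in HN. apply Rabs_def2 in HN. lra. }
  destruct (ev_all _ B Hsmall) as [s0 Hs0].
  exists (fun s => cs0 (s + s0)%nat). split; [|split].
  - intros; apply Hnp.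
  - apply (is_lim_seq_incr_n cs0 s0) in Hlim. exact Hlim.
  - intros s. split.
    + intros x. destruct (lt_dec x B). apply Hs0; auto; lia.
      left. apply Hbig. lia. specialize (Hfr (s + s0)%nat). unfold cs0. lra.
    + exists B. apply Rgt_not_eq. apply Hbig. lia. specialize (Hfr (s + s0)%nat). unfold cs0. lra.
Qed.

Theorem mainTheorem2 (a : R) (c : Z) (F1 F2 : list nat) :
  0 < a < 1 -> (c <= 0)%Z -> finset_pos F1 -> finset_pos F2 -> condC c F1 F2 ->
  (forall cs : nat -> R,
     (forall s, ~ nonpos_int (cs s)) -> is_lim_seq cs (IZR c) ->
     forall x : nat, is_lim_seq (fun s => rho F1 F2 a (cs s) x) (nu c F1 F2 a x))
  /\
  (positive_measure (nu c F1 F2 a) ->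
   exists cs : nat -> R,
     (forall s, ~ nonpos_int (cs s)) /\ is_lim_seq cs (IZR c) /\
     forall s, positive_measure (rho F1 F2 a (cs s))).
Proof. intros Ha Hc HF1 HF2 HC. split.
  - apply part1; auto.
  - apply part2; auto.
Qed.
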